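(* There is an integer $N$ such that, for every $\nu\ge N$, there are only finitely many numerical semigroups $S$, with minimal generators $a_1<a_2<\cdots<a_\nu$, such that $a_2>\frac{c(S)+\mu(S)}{3}$, $\nu(S)=\nu$, $\mu(S)\le\frac49\nu^2$, and $S$ does not satisfy Wilf's conjecture (i.e. $\nu(S)|L(S)|<c(S)$).
   Context: A numerical semigroup is a submonoid $S\subseteq\mathbb{N}$ with finite complement. $\nu(S)$ is the number of minimal generators, $\mu(S)=a_1$ the multiplicity, $c(S)$ the conductor (least integer with $c(S)+\mathbb{N}\subseteq S$), and $L(S)=\{x\in S:0\le x<c(S)\}$. Wilf's conjecture for $S$ is the inequality $\nu(S)|L(S)|\ge c(S)$. *)

(* Defs.v *)
From mathcomp Require Import all_boot.
Set Implicit Arguments. Unset Strict Implicit. Unset Printing Implicit Defensive.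

Definition is_numerical_semigroup (S : pred nat) : Prop :=
  [/\ S 0,
      (forall x y, S x -> S y -> S (x + y)) &
      exists c, forall n, c <= n -> S n].

Definition is_min_gen (S : pred nat) (x : nat) : Prop :=
  [/\ S x, 0 < x &
      ~ (exists y z, [/\ 0 < y, 0 < z, S y, S z & y + z = x])].

(* a = [:: a_1; ...; a_nu] is the strictly increasing list of all the
   minimal generators of S. Then nu(S) = size a, mu(S) = a_1 = nth 0 a 0,
   and a_2 = nth 0 a 1. *)
Definition min_gens (S : pred nat) (a : seq nat) : Prop :=
  sorted ltn a /\ (forall x, is_min_gen S x <-> x \in a).

Definition is_conductor (S : pred nat) (c : nat) : Prop :=
  (forall n, c <= n -> S n) /\
  (forall c', (forall n, c' <= n -> S n) -> c <= c').

Definition card_L (S : pred nat) (c : nat) : nat := count S (iota 0 c).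

(* Main.v *)
Require Import Defs.
From Stdlib Require Import Classical.
From mathcomp Require Import all_boot zify.
Set Implicit Arguments. Unset Strict Implicit. Unset Printing Implicit Defensive.

Lemma ns_mulm S k m : is_numerical_semigroup S -> S m -> S (k * m).
Proof.
case=> S0 Sadd _ Sm; elim: k => [|k IH]; first by rewrite mul0n.
by rewrite mulSn; apply: Sadd.
Qed.

Lemma mingen_in S a x : min_gens S a -> x \in a -> [/\ S x, 0 < x &
      ~ (exists y z, [/\ 0 < y, 0 < z, S y, S z & y + z = x])].
Proof. by case=> _ H /H. Qed.

Lemma decomp S m G : is_numerical_semigroup S -> min_gens S (m :: G) ->
  forall s, S s -> exists j l, all (mem G) l /\ s = j * m + sumn l.
Proof.
move=> NS MG s; elim: s {-2}s (leqnn s) => [|n IH] s hs Ss.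
  by exists 0, [::]; split => //=; lia.
case: (posnP s) => [->|s0]; first by exists 0, [::]; split => //.
case: (classic (is_min_gen S s)) => [/(proj2 MG)|nmin].
  rewrite inE => /orP [/eqP->|sG]; first by exists 1, [::]; split => //=; lia.
  by exists 0, [:: s]; rewrite /= sG; split => //=; lia.
have [y [z [y0 z0 Sy Sz yz]]] : exists y z, [/\ 0 < y, 0 < z, S y, S z & y + z = s].
  apply: NNPP => H; apply: nmin; split => //.
have [j1 [l1 [h1 e1]]] := IH y ltac:(lia) Sy.
have [j2 [l2 [h2 e2]]] := IH z ltac:(lia) Sz.
exists (j1 + j2), (l1 ++ l2); rewrite all_cat h1 h2 sumn_cat; split => //.
lia.
Qed.


Lemma same_res S m G x y : is_numerical_semigroup S -> min_gens S (m :: G) ->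
  x \in m :: G -> y \in m :: G -> x < y -> x %% m = y %% m -> False.
Proof.
move=> NS MG xa ya xy exy.
have [Sm m0 _] := mingen_in MG (mem_head m G).
have [Sx x0 _] := mingen_in MG xa.
have [Sy y0 ny] := mingen_in MG ya.
have : m %| y - x by rewrite -eqn_mod_dvd ?exy // ltnW.
move/divnK => e.
apply: ny; exists x, (y - x); split => //; try lia.
by rewrite -e; apply: ns_mulm.
Qed.

Lemma sorted_facts m G : sorted ltn (m :: G) ->
  [/\ uniq G, all (ltn m) G & forall x, x \in G -> nth 0 (m :: G) 1 <= x].
Proof.
move=> so; have /= := so; move=> pa.
split.
- by have /andP[] := sorted_uniq ltn_trans ltnn so.
- exact: order_path_min ltn_trans pa.
case: G so pa => [//|a2 G'] so /= /andP[_ pa] x.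
rewrite inE => /orP[/eqP->//|xG].
have /allP := order_path_min ltn_trans pa.
by move/(_ x xG); apply: ltnW.
Qed.

Lemma res_uniq S m G : is_numerical_semigroup S -> min_gens S (m :: G) ->
  uniq (map (modn^~ m) (0 :: G)).
Proof.
move=> NS MG.
have [uG allG _] := sorted_facts (proj1 MG).
have [_ m0 _] := mingen_in MG (mem_head m G).
rewrite map_inj_in_uniq; last first.
  move=> x y; rewrite !inE => /orP[/eqP->|xG] /orP[/eqP->|yG] //=.
  - rewrite mod0n => e; exfalso.
    apply: (@same_res S m G m y) => //; first exact: mem_head.
      by rewrite inE yG orbT.
      by move/allP: allG => /(_ y yG).
    by rewrite modnn.
  - rewrite mod0n => e; exfalso.
    apply: (@same_res S m G m x) => //; first exact: mem_head.
      by rewrite inE xG orbT.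
      by move/allP: allG => /(_ x xG).
    by rewrite modnn.
  - move=> e; case: (ltngtP x y) => // h; exfalso.
      by apply: (@same_res S m G x y) => //; rewrite inE ?xG ?yG orbT.
    by apply: (@same_res S m G y x) => //; rewrite inE ?xG ?yG orbT.
rewrite /= uG andbT; apply/negP => /(allP allG) /=; lia.
Qed.


Lemma res_cover S m G c : is_numerical_semigroup S -> min_gens S (m :: G) ->
  (forall n, c <= n -> S n) -> c + m < 3 * nth 0 (m :: G) 1 ->
  forall r, r < m -> r \notin map (modn^~ m) (0 :: G) ->
  exists x y, [/\ x \in G, y \in G, x <= y, x + y < c + m & (x + y) %% m = r].
Proof.
move=> NS MG Sc hc r rm rR.
have [uG allG a2G] := sorted_facts (proj1 MG).
have [_ m0 _] := mingen_in MG (mem_head m G).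
have [k [k1 k2]] : exists k, c <= r + m * k /\ r + m * k < c + m.
  have e := divn_eq c m; have := ltn_pmod c m0.
  case: (leqP c (r + m * (c %/ m))) => h1 h2.
    by exists (c %/ m); split => //; lia.
  by exists (c %/ m).+1; split; lia.
have sr : (r + m * k) %% m = r by rewrite addnC mulnC modnMDl modn_small.
have [j [l [lG e]]] := decomp NS MG (Sc _ k1).
case: l lG e => [|x [|y [|z l]]] /= lG e.
- exfalso; move: rR; rewrite /= inE mod0n -sr e addn0 modnMl; by rewrite eqxx.
- exfalso; move: rR; rewrite /= inE -sr e addn0 modnMDl.
  case/andP: lG => xG _. by rewrite (map_f (modn^~ m) xG) orbT.
- case/and3P: lG => xG yG _.
  have ey : (x + y) %% m = r by rewrite -sr e addn0 modnMDl.
  case: (leqP x y) => h.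
    by exists x, y; split => //; lia.
  by exists y, x; split => //; try lia; rewrite addnC.
- exfalso; case/and4P: lG => xG yG zG _.
  have := a2G _ xG; have := a2G _ yG; have := a2G _ zG. lia.
Qed.


Definition nn m c w := (c - w + m.-1) %/ m.
Definition Lw m c w := [seq w + j * m | j <- iota 0 (nn m c w)].

Lemma nn_ge m c w : 0 < m -> c - w <= nn m c w * m.
Proof.
move=> m0; have e := divn_eq (c - w + m.-1) m; have := ltn_pmod (c - w + m.-1) m0.
rewrite /nn; lia.
Qed.

Lemma nn_lt m c w j : 0 < m -> j < nn m c w -> w + j * m < c.
Proof.
move=> m0 hj; have e := divn_eq (c - w + m.-1) m.
have : j.+1 * m <= nn m c w * m by rewrite leq_mul2r hj orbT.
rewrite mulSn /nn; lia.
Qed.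

Lemma Lw_res m c w x : x \in Lw m c w -> x %% m = w %% m.
Proof. by case/mapP => j _ ->; rewrite addnC modnMDl. Qed.

Lemma flat_res m c W x : x \in flatten (map (Lw m c) W) -> x %% m \in map (modn^~ m) W.
Proof.
elim: W => //= w W IH; rewrite mem_cat inE => /orP[/Lw_res ->|/IH ->]; first by rewrite eqxx.
by rewrite orbT.
Qed.

Lemma flat_uniq m c W : 0 < m -> uniq (map (modn^~ m) W) -> uniq (flatten (map (Lw m c) W)).
Proof.
move=> m0; elim: W => //= w W IH /andP[wn u]; rewrite cat_uniq IH // andbT.
apply/andP; split.
  rewrite map_inj_uniq ?iota_uniq // => i j /eqP; rewrite eqn_add2l eqn_mul2r.
  by case/orP => [/eqP|/eqP]; lia.
apply/hasP => -[x /flat_res h /Lw_res e]; move: wn; by rewrite -e h.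
Qed.

Lemma size_flat m c W : size (flatten (map (Lw m c) W)) = sumn (map (nn m c) W).
Proof. by elim: W => //= w W IH; rewrite size_cat size_map size_iota IH. Qed.

Lemma card_L_lower S m G c : is_numerical_semigroup S -> min_gens S (m :: G) ->
  sumn (map (nn m c) (0 :: G)) <= card_L S c.
Proof.
move=> NS MG.
have [_ m0 _] := mingen_in MG (mem_head m G).
have [Sm _ _] := mingen_in MG (mem_head m G).
rewrite /card_L -size_flat -size_filter; apply: uniq_leq_size.
  exact: flat_uniq (res_uniq NS MG).
move=> x /flattenP [l /mapP [w wW ->] /mapP [j]]; rewrite mem_iota add0n => /andP [_ hj] ->.
rewrite mem_filter mem_iota add0n (nn_lt m0 hj) andbT.
rewrite andbT; have [S0 Sadd _] := NS; apply: Sadd; last exact: ns_mulm.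
move: wW; rewrite inE => /orP[/eqP->//|wG].
by have [] := mingen_in MG (a := m :: G) (x := w) ltac:(by rewrite inE wG orbT).
Qed.

Lemma card_L_bound S m G c : is_numerical_semigroup S -> min_gens S (m :: G) ->
  c + sumn (map (fun x => c - x) G) <= m * card_L S c.
Proof.
move=> NS MG.
have [_ m0 _] := mingen_in MG (mem_head m G).
apply: leq_trans (leq_mul (leqnn m) (card_L_lower c NS MG)).
have : forall W, sumn (map (fun x => c - x) W) <= m * sumn (map (nn m c) W).
  elim=> //= w W IH; rewrite mulnDr; apply: leq_add => //.
  by rewrite mulnC; apply: nn_ge.
by move/(_ (0 :: G)); rewrite /= subn0.
Qed.


Definition Pset (G : seq nat) B :=
  [seq p <- [seq (x, y) | x <- G, y <- G] | (p.1 <= p.2) && (p.1 + p.2 < B)].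
Definition deg (G : seq nat) B x :=
  count (fun y => (x <= y) && (x + y < B)) G + count (fun y => (y <= x) && (y + x < B)) G.

Lemma sum_if_const (G : seq nat) (Q : pred nat) k :
  \sum_(y <- G) (if Q y then k else 0) = k * count Q G.
Proof. by elim: G => [|y G IH]; rewrite ?big_nil ?big_cons ?muln0 //= IH; case: (Q y) => /=; lia. Qed.

Lemma dcount G B (t : nat -> nat) :
  \sum_(p <- Pset G B) (t p.1 + t p.2) = \sum_(x <- G) t x * deg G B x.
Proof.
rewrite big_filter big_mkcond big_allpairs /=.
have -> : \sum_(x <- G) \sum_(y <- G)
     (if (x <= y) && (x + y < B) then t x + t y else 0) =
  \sum_(x <- G) \sum_(y <- G) (if (x <= y) && (x + y < B) then t x else 0) +
  \sum_(x <- G) \sum_(y <- G) (if (x <= y) && (x + y < B) then t y else 0).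
  rewrite -big_split /=; apply: eq_bigr => x _; rewrite -big_split /=.
  by apply: eq_bigr => y _; case: ifP.
rewrite [X in _ + X]exchange_big /= -big_split /=; apply: eq_bigr => x _.
by rewrite /deg mulnDr !sum_if_const.
Qed.

Lemma deg_le G B x : uniq G -> deg G B x <= (size G).+1.
Proof.
move=> uG; rewrite /deg -count_predUI.
have h1 := count_size (predU (fun y => (x <= y) && (x + y < B)) (fun y => (y <= x) && (y + x < B))) G.
rewrite -addn1; apply: leq_add => //.
apply: leq_trans (_ : count (pred1 x) G <= 1).
  apply: sub_count => y /= /andP[/andP[h _] /andP[h' _]]; apply/eqP; lia.
by rewrite -/(count_mem x G) count_uniq_mem //; case: (x \in G).
Qed.

Lemma cnt_aux (p q : pred nat) (G : seq nat) :
  count (predI p q) G <= 1 -> count p G + count q G = (size G).+1 -> all (predU p q) G.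
Proof.
rewrite -count_predUI => h e; have := count_size (predU p q) G.
rewrite all_count => h'; apply/eqP; lia.
Qed.

Lemma deg_full G B x : uniq G -> deg G B x = (size G).+1 -> forall y, y \in G -> x + y < B.
Proof.
move=> uG e y yG.
have h2 : count (predI (fun y => (x <= y) && (x + y < B)) (fun y => (y <= x) && (y + x < B))) G <= 1.
  apply: leq_trans (_ : count (pred1 x) G <= 1).
    apply: sub_count => z /= /andP[/andP[h _] /andP[h' _]]; apply/eqP; lia.
  by rewrite -/(count_mem x G) count_uniq_mem //; case: (x \in G).
move/allP: (cnt_aux h2 e) => /(_ y yG) /= /orP[/andP[_ //]|/andP[_]].
by rewrite addnC.
Qed.


Lemma sum_const_seq (T : Type) (s : seq T) k : \sum_(i <- s) k = size s * k.
Proof. by elim: s => [|i s IH]; rewrite ?big_nil ?big_cons //= IH mulSn. Qed.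

Lemma sumn_big (G : seq nat) (t : nat -> nat) : sumn (map t G) = \sum_(x <- G) t x.
Proof. by elim: G => [|x G IH]; rewrite ?big_nil ?big_cons //= IH. Qed.

Lemma m_le S m G c : is_numerical_semigroup S -> min_gens S (m :: G) ->
  (forall n, c <= n -> S n) -> c + m < 3 * nth 0 (m :: G) 1 ->
  m <= (size G).+1 + size (Pset G (c + m)).
Proof.
move=> NS MG Sc h3.
have -> : (size G).+1 + size (Pset G (c + m)) =
  size (map (modn^~ m) (0 :: G) ++ map (fun p => (p.1 + p.2) %% m) (Pset G (c + m))).
  by rewrite size_cat !size_map.
rewrite -{1}(size_iota 0 m).
apply: uniq_leq_size; first exact: iota_uniq.
move=> r; rewrite mem_iota add0n => /andP[_ rm]; rewrite mem_cat.
case: (boolP (r \in map (modn^~ m) (0 :: G))) => // rR /=.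
have [x [y [xG yG xy xyB e]]] := res_cover NS MG Sc h3 rm rR.
apply/mapP; exists (x, y) => //.
by rewrite mem_filter /= xy xyB; apply: allpairs_f.
Qed.

Lemma sum_ge_one (G : seq nat) (f : nat -> nat) x0 : uniq G -> x0 \in G ->
  f x0 <= \sum_(x <- G) f x.
Proof. by move=> uG xG; rewrite (bigD1_seq x0) //= leq_addr. Qed.

Lemma deg_pos_partner G B x : 0 < deg G B x -> exists2 y, y \in G & x + y < B.
Proof.
rewrite /deg addn_gt0 => /orP[|]; rewrite -has_count => /hasP [y yG /andP[_ h]].
  by exists y.
by exists y => //; rewrite addnC.
Qed.

Lemma wilf_large S m G c : is_numerical_semigroup S -> min_gens S (m :: G) ->
  (forall n, c <= n -> S n) -> c + m < 3 * nth 0 (m :: G) 1 ->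
  9 * m <= 4 * (size G).+1 ^ 2 -> 3 * m ^ 2 <= c ->
  c <= (size G).+1 * card_L S c.
Proof.
move=> NS MG Sc h3 h9 hc.
have [uG allG a2G] := sorted_facts (proj1 MG).
have [_ m0 _] := mingen_in MG (mem_head m G).
set nu := (size G).+1.
set P := Pset G (c + m).
set T := \sum_(x <- G) (c - x).
have hL : c + T <= m * card_L S c by rewrite /T -sumn_big; apply: card_L_bound.
have hm : m <= nu + size P := m_le NS MG Sc h3.
have hcm : m + m <= c by nia.
set k := m - nu.
have hpair : size P * (c - m + 1) <= \sum_(p <- P) ((c - p.1) + (c - p.2)).
  rewrite -sum_const_seq !big_seq; apply: leq_sum => p; rewrite mem_filter => /andP[/andP[_ h] _].
  lia.
have hdc := dcount G (c + m) (fun x => c - x); rewrite -/P in hdc.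
have hdeg : forall x, x \in G -> deg G (c + m) x <= nu by move=> x _; apply: deg_le.
have hsplit : nu * T = \sum_(x <- G) (c - x) * deg G (c + m) x +
                        \sum_(x <- G) (c - x) * (nu - deg G (c + m) x).
  rewrite /T big_distrr -big_split /=; apply: eq_big_seq => x xG.
  rewrite -mulnDr mulnC; congr (_ * _); have := hdeg x xG; lia.
have hmm : m * m * 3 <= c by move: hc; rewrite mulnC.
have hkm : k * (m - 1) <= m * m - m.
  have : k * (m - 1) <= m * (m - 1) by apply: leq_mul; rewrite /k; lia.
  by rewrite [m * (m - 1)]mulnBr muln1.
have ekc : k * c = k * (c - m + 1) + k * (m - 1).
  by rewrite -mulnDr; congr (_ * _); lia.
suff key : k * c <= nu * T.
  have : m * c <= m * (nu * card_L S c).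
    apply: leq_trans (_ : nu * (c + T) <= _); last first.
      by rewrite mulnCA leq_mul2l hL orbT.
    apply: leq_trans (_ : (nu + k) * c <= _).
      by rewrite leq_mul2r; apply/orP; right; rewrite /k; lia.
    by rewrite mulnDl mulnDr leq_add2l.
  by rewrite leq_mul2l => /orP[|//]; rewrite eqn0Ngt m0.
case: (ltnP k (size P)) => hk.
  have : k.+1 * (c - m + 1) <= nu * T.
    apply: leq_trans (leq_mul hk (leqnn _)) _; rewrite hsplit -hdc.
    exact: leq_trans hpair (leq_addr _ _).
  rewrite mulSn; lia.
case: (posnP k) => [->|k0]; first by rewrite mul0n.
have [x0 x0G /andP[d1 d2]] : exists2 x0, x0 \in G & 0 < deg G (c + m) x0 < nu.
  apply: NNPP => nex.
  have hall : forall x, x \in G -> 0 < deg G (c + m) x -> deg G (c + m) x = nu.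
    move=> x xG dx; apply/eqP; rewrite eqn_leq hdeg //=; apply: contraT; rewrite -ltnNge => dl.
    by case: nex; exists x => //; rewrite dx dl.
  have [p pP] : exists p, p \in P.
    have : 0 < size P by rewrite /k in k0; lia.
    by case: (P) => [|p ?] // _; exists p; rewrite mem_head.
  move: pP; rewrite mem_filter => /andP[/andP[p12 pB]] /allpairsP [[x y] [xG yG pe]].
  rewrite pe /= in p12 pB.
  have dx : 0 < deg G (c + m) x.
    by rewrite /deg addn_gt0 -has_count; apply/orP; left; apply/hasP; exists y => //; rewrite p12 pB.
  have fx := deg_full uG (hall x xG dx).
  have allfull : forall z, z \in G -> deg G (c + m) z = nu.
    move=> z zG; apply: hall => //; rewrite /deg addn_gt0 -!has_count.
    case: (leqP z x) => hzx; apply/orP; [left|right]; apply/hasP; exists x => //.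
      by rewrite hzx addnC fx.
    by rewrite (ltnW hzx) fx.
  have e2 := dcount G (c + m) (fun _ => 1); rewrite -/P in e2.
  rewrite sum_const_seq (eq_big_seq (fun _ => nu)) in e2; last first.
    by move=> z zG; rewrite mul1n allfull.
  rewrite sum_const_seq in e2.
  have h9' : 9 * m <= 4 * (nu * nu) := h9.
  have enu : nu * nu = nu + size G * nu by rewrite /nu mulSn.
  have nu0 : 0 < nu by [].
  rewrite /k in hk k0; clear -e2 h9' enu hk k0 nu0; clearbody nu.
  move: (size P) (size G * nu) (nu * nu) e2 h9' enu hk k0 nu0 => p X Y; rewrite mulnC; lia.
have [y yG hy] := deg_pos_partner d1.
have ha := a2G _ yG.
have hx0 : 3 * (c - x0) + 2 * m >= c by lia.
have : c - x0 <= \sum_(x <- G) (c - x) * (nu - deg G (c + m) x).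
  apply: leq_trans (sum_ge_one (fun x => (c - x) * (nu - deg G (c + m) x)) uG x0G).
  by rewrite leq_pmulr // subn_gt0.
have hkP : k <= size P by rewrite /k; lia.
have : size P * (c - m + 1) >= k * (c - m + 1) by rewrite leq_mul2r hkP orbT.
rewrite hsplit -hdc; lia.
Qed.


Theorem proposition4p8 :
  exists N : nat, forall nu : nat, N <= nu ->
    exists Ls : seq (pred nat),
      forall (S : pred nat) (a : seq nat) (c : nat),
        is_numerical_semigroup S ->
        min_gens S a ->
        size a = nu ->
        is_conductor S c ->
        c + nth 0 a 0 < 3 * nth 0 a 1 ->
        9 * nth 0 a 0 <= 4 * nu ^ 2 ->
        nu * card_L S c < c ->
        exists2 i, i < size Ls & S =1 nth (fun _ => false) Ls i.
Proof.
exists 0 => nu _.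
pose K := 3 * (nu ^ 2) ^ 2.
pose f := fun t : K.-tuple bool => fun n => (K <= n) || nth false t n.
exists (map f (enum {: K.-tuple bool})).
move=> S a c NS MG sa [Sc _] h3 h9 nW.
case: a MG sa h3 h9 => [|m G] MG sa h3 h9; first by rewrite /= in h3.
have cK : c < K.
  rewrite ltnNge; apply/negP => hK.
  have hmn : m <= nu ^ 2 by move: h9 => /=; lia.
  have hm2 : m ^ 2 <= (nu ^ 2) ^ 2 by rewrite leq_exp2r.
  have h9' : 9 * m <= 4 * (size G).+1 ^ 2 by rewrite -[(size G).+1]/(size (m :: G)) sa.
  have := wilf_large NS MG Sc h3 h9' ltac:(rewrite /K in hK; lia).
  rewrite -[(size G).+1]/(size (m :: G)) sa; lia.
pose t := @Tuple K bool (mkseq S K) (introT eqP (size_mkseq S K)).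
have tin : t \in enum {: K.-tuple bool} by rewrite mem_enum.
exists (index t (enum {: K.-tuple bool})); first by rewrite size_map index_mem.
move=> n; rewrite (nth_map t); last by rewrite index_mem.
rewrite nth_index // /f /=.
case: (leqP K n) => hn /=; first by apply: Sc; lia.
by rewrite nth_mkseq.
Qed.
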